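(* If $L$ is a finite, simple, modular, complemented lattice, then $\mathsf{C}(L)=\mathsf{Pol}_{0,1}(L)$.
   Context: $L$ has bounds $0,1$. $L$ is simple if its only congruences (compatible equivalence relations) are the identity relation and $L^2$. $L$ is modular if $a\le c$ implies $a\vee(b\wedge c)=(a\vee b)\wedge c$; complemented if every $x$ has $y$ with $x\wedge y=0$, $x\vee y=1$. An $n$-ary aggregation function on $L$ ($n\ge1$) is a nondecreasing map $A:L^n\to L$ with $A(0,\dots,0)=0$, $A(1,\dots,1)=1$; $\mathsf{C}(L)$ is the set of all of them. Polynomials on $L$ are functions $L^n\to L$ built from projections and constants by finitely many pointwise joins and meets; $\mathsf{Pol}_{0,1}(L)$ is the set of polynomials preserving $0$ and $1$. *)

(* Defs.v *)
From HB Require Import structures.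
From mathcomp Require Import all_boot all_order.
Set Implicit Arguments. Unset Strict Implicit. Unset Printing Implicit Defensive.
Import Order.TTheory.
Local Open Scope order_scope.

Section LatticeDefs.
Context {disp : Order.disp_t} (L : tbLatticeType disp).

Definition lattice_congruence (R : L -> L -> Prop) : Prop :=
  [/\ (forall x, R x x), (forall x y, R x y -> R y x),
      (forall x y z, R x y -> R y z -> R x z),
      (forall x y x' y', R x x' -> R y y' -> R (x `|` y) (x' `|` y')) &
      (forall x y x' y', R x x' -> R y y' -> R (x `&` y) (x' `&` y'))].

Definition simple_lattice : Prop :=
  forall R : L -> L -> Prop, lattice_congruence R ->
    (forall x y, R x y <-> x = y) \/ (forall x y, R x y).

Definition modular_lattice : Prop :=
  forall a b c : L, a <= c -> a `|` (b `&` c) = (a `|` b) `&` c.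

Definition complemented_lattice : Prop :=
  forall x : L, exists y : L, x `&` y = \bot /\ x `|` y = \top.

Definition aggregation_function (n : nat) (A : ('I_n -> L) -> L) : Prop :=
  [/\ (forall x y : 'I_n -> L, (forall i, x i <= y i) -> A x <= A y),
      A (fun _ => \bot) = \bot &
      A (fun _ => \top) = \top].

Inductive lpoly_term (n : nat) : Type :=
  | LPVar of 'I_n
  | LPConst of L
  | LPJoin of lpoly_term n & lpoly_term n
  | LPMeet of lpoly_term n & lpoly_term n.

Fixpoint lpoly_eval (n : nat) (t : lpoly_term n) (x : 'I_n -> L) : L :=
  match t with
  | LPVar i => x i
  | LPConst c => c
  | LPJoin t1 t2 => lpoly_eval t1 x `|` lpoly_eval t2 x
  | LPMeet t1 t2 => lpoly_eval t1 x `&` lpoly_eval t2 x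
  end.

Definition is_polynomial (n : nat) (f : ('I_n -> L) -> L) : Prop :=
  exists t : lpoly_term n, forall x, f x = lpoly_eval t x.

Definition pol01 (n : nat) (f : ('I_n -> L) -> L) : Prop :=
  [/\ is_polynomial f, f (fun _ => \bot) = \bot & f (fun _ => \top) = \top].

End LatticeDefs.

(* Main.v *)
Require Import Defs.
From HB Require Import structures.
From mathcomp Require Import all_boot all_order.
From Stdlib Require Import Classical.
Set Implicit Arguments. Unset Strict Implicit.

Section Helpers.
Import Order.TTheory.
Local Open Scope order_scope.
Context {disp : Order.disp_t} (L : finTBLatticeType disp).

Fixpoint subst1 (n : nat) (t : lpoly_term L 1) (s : lpoly_term L n) : lpoly_term L n :=
  match t with
  | LPVar _ => s
  | LPConst c => LPConst n c
  | LPJoin t1 t2 => LPJoin (subst1 t1 s) (subst1 t2 s)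
  | LPMeet t1 t2 => LPMeet (subst1 t1 s) (subst1 t2 s)
  end.

Lemma eval_subst1 n t (s : lpoly_term L n) x :
  lpoly_eval (subst1 t s) x = lpoly_eval t (fun _ => lpoly_eval s x).
Proof. by elim: t => //= t1 -> t2 ->. Qed.

Lemma eval_mono n (t : lpoly_term L n) x y :
  (forall i, x i <= y i) -> lpoly_eval t x <= lpoly_eval t y.
Proof.
move=> H; elim: t => //= t1 H1 t2 H2; [exact: leU2 | exact: leI2].
Qed.

Lemma poly_mono n (g : ('I_n -> L) -> L) x y :
  is_polynomial g -> (forall i, x i <= y i) -> g x <= g y.
Proof. by case=> t Ht H; rewrite !Ht; apply: eval_mono. Qed.

Lemma poly_const n (c : L) : is_polynomial (fun _ : 'I_n -> L => c).
Proof. by exists (LPConst n c). Qed.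

Lemma poly_var n (i : 'I_n) : is_polynomial (fun x : 'I_n -> L => x i).
Proof. by exists (LPVar L i). Qed.

Lemma poly_join n (g h : ('I_n -> L) -> L) :
  is_polynomial g -> is_polynomial h -> is_polynomial (fun x => g x `|` h x).
Proof. by case=> t Ht [u Hu]; exists (LPJoin t u) => x /=; rewrite Ht Hu. Qed.

Lemma poly_meet n (g h : ('I_n -> L) -> L) :
  is_polynomial g -> is_polynomial h -> is_polynomial (fun x => g x `&` h x).
Proof. by case=> t Ht [u Hu]; exists (LPMeet t u) => x /=; rewrite Ht Hu. Qed.

Definition upoly (p : L -> L) := is_polynomial (fun x : 'I_1 -> L => p (x ord0)).

Lemma poly_comp n (p : L -> L) (g : ('I_n -> L) -> L) :
  upoly p -> is_polynomial g -> is_polynomial (fun x => p (g x)).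
Proof.
case=> t Ht [u Hu]; exists (subst1 t u) => x.
by rewrite eval_subst1 -Hu -(Ht (fun _ => g x)).
Qed.

Lemma upoly_id : upoly id.
Proof. exact: poly_var. Qed.

Lemma upoly_const c : upoly (fun _ => c).
Proof. exact: poly_const. Qed.

Lemma upoly_comp p q : upoly p -> upoly q -> upoly (fun y => p (q y)).
Proof. by move=> Hp Hq; exact: (poly_comp (g := fun x : 'I_1 -> L => q (x ord0)) Hp Hq). Qed.

Lemma upoly_join p q : upoly p -> upoly q -> upoly (fun y => p y `|` q y).
Proof. by move=> Hp Hq; apply: poly_join. Qed.

Lemma upoly_meet p q : upoly p -> upoly q -> upoly (fun y => p y `&` q y).
Proof. by move=> Hp Hq; apply: poly_meet. Qed.

Lemma upoly_mono p x y : upoly p -> x <= y -> p x <= p y.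
Proof.
move=> Hp le; exact: (poly_mono (x := fun _ => x) (y := fun _ => y) Hp (fun _ => le)).
Qed.

Lemma upoly_joinc p c : upoly p -> upoly (fun z => p (z `|` c)).
Proof. by move=> Hp; apply: upoly_comp Hp (upoly_join upoly_id (upoly_const c)). Qed.

Lemma upoly_cjoin p c : upoly p -> upoly (fun z => p (c `|` z)).
Proof. by move=> Hp; apply: upoly_comp Hp (upoly_join (upoly_const c) upoly_id). Qed.

Lemma upoly_meetc p c : upoly p -> upoly (fun z => p (z `&` c)).
Proof. by move=> Hp; apply: upoly_comp Hp (upoly_meet upoly_id (upoly_const c)). Qed.

Lemma upoly_cmeet p c : upoly p -> upoly (fun z => p (c `&` z)).
Proof. by move=> Hp; apply: upoly_comp Hp (upoly_meet (upoly_const c) upoly_id). Qed.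

Lemma cong_of (T : Type) (G : L -> T) :
  lattice_congruence (fun x y => forall p, upoly p -> G (p x) = G (p y)).
Proof.
split.
- by [].
- by move=> x y H p Hp; rewrite H.
- by move=> x y z H1 H2 p Hp; rewrite H1 // H2.
- move=> x y x' y' H1 H2 p Hp.
  rewrite (H1 (fun z => p (z `|` y))); last exact: upoly_joinc.
  exact: (H2 (fun z => p (x' `|` z)) (upoly_cjoin _ Hp)).
- move=> x y x' y' H1 H2 p Hp.
  rewrite (H1 (fun z => p (z `&` y))); last exact: upoly_meetc.
  exact: (H2 (fun z => p (x' `&` z)) (upoly_cmeet _ Hp)).
Qed.

Hypothesis Hsimple : simple_lattice L.
Hypothesis Hmod : modular_lattice L.
Hypothesis Hcompl : complemented_lattice L.

Lemma lemmaA (u : L) : u <> \bot ->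
  exists s, [/\ upoly s, s \bot = \bot & s u = \top].
Proof.
move=> Hu.
pose S k := exists s, [/\ upoly s, s \bot = \bot & s u = k].
have step : forall (m : nat) (k : L), (#|[set y : L | (k < y)%O]| < m)%N -> S k -> u <= k ->
   exists k', [/\ S k', u <= k' &
     forall s, upoly s -> s \bot = \bot -> s k' <= k'].
  elim=> [//|m IH] k Hm Sk uk.
  destruct (classic (forall s, upoly s -> s \bot = \bot -> s k <= k)) as [H|H].
    by exists k.
  case: (not_all_ex_not _ _ H) => s Hs.
  case: (imply_to_and _ _ Hs) => Hs1 {}Hs.
  case: (imply_to_and _ _ Hs) => Hs2 {}Hs3.
  case: Sk => s0 [P0 B0 U0].
  have Sk2 : S (k `|` s k).
    exists (fun y => s0 y `|` s (s0 y)); split.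
    - exact: upoly_join P0 (upoly_comp Hs1 P0).
    - by rewrite B0 Hs2 joinxx.
    - by rewrite U0.
  apply: (IH (k `|` s k)) => //; last by apply: le_trans uk (leUl _ _).
  rewrite -ltnS; apply: leq_trans Hm; rewrite ltnS; apply: proper_card.
  apply/properP; split.
    apply/subsetP => y; rewrite !inE => lt; apply: le_lt_trans lt; exact: leUl.
  exists (k `|` s k); rewrite !inE ?ltxx // lt_neqAle leUl andbT.
  apply/eqP => E; apply: Hs3; rewrite [X in _ <= X]E; exact: leUr.
have [k [Sk uk Pk]] : exists k', [/\ S k', u <= k' &
     forall s, upoly s -> s \bot = \bot -> s k' <= k'].
  apply: (step (#|[set y : L | (u < y)%O]|.+1) u) => //.
  by exists id; split => //; exact: upoly_id.
have Hth : forall p, upoly p -> p \bot `|` k = p k `|` k.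
  move=> p Hp; case: (Hcompl (p \bot)) => c [Hc1 Hc2].
  have Hs : p k `&` c <= k.
    apply: (Pk (fun y => p y `&` c)); first exact: upoly_meet Hp (upoly_const c).
    by [].
  have dle : p \bot <= p k by apply: upoly_mono => //; exact: le0x.
  have E : p k = p \bot `|` (c `&` p k) by rewrite Hmod // Hc2 meetC meetx1.
  apply/le_anti/andP; split; first by apply: leU2.
  rewrite leUx leUr andbT {1}E leUx leUl /=.
  by apply: le_trans (leUr _ _); rewrite meetC.
case: (Hsimple (cong_of (fun z => z `|` k))) => H.
  have := (proj1 (H \bot k)) Hth => E.
  by exfalso; apply: Hu; apply/le_anti; rewrite le0x E uk.
have := H \bot \top id upoly_id; rewrite /= join0x joinC joinx1 => E.
by move: Sk; rewrite /S E.
Qed.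

Lemma lemmaB (a b : L) : ~~ (a <= b) ->
  exists r, [/\ upoly r, r a = \top & r b = \bot].
Proof.
move=> nab.
have nR : ~ (forall p, upoly p -> (p b == \bot) = (p (a `|` b) == \bot)).
  move=> HR; case: (Hsimple (cong_of (fun z => z == \bot))) => H.
    have E := (proj1 (H _ _)) HR.
    by move: nab; rewrite E leUl.
  have := H \bot \top id upoly_id; rewrite /= eqxx => /esym/eqP E.
  by move: nab; rewrite (le_trans (lex1 a)) // E le0x.
case: (not_all_ex_not _ _ nR) => p Hp.
case: (imply_to_and _ _ Hp) => Hp1 {}Hp2.
have Hb : p b = \bot /\ p (a `|` b) <> \bot.
  case E1: (p b == \bot) Hp2; case E2: (p (a `|` b) == \bot) => // _.
    by split; [exact/eqP | move/eqP; rewrite E2].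
  move/eqP: E2 => E2; move/eqP: E1; case.
  by apply/le_anti; rewrite le0x -E2 andbT; apply: upoly_mono => //; exact: leUr.
case: Hb => Hb1 Hb2.
case: (lemmaA Hb2) => s [Hs1 Hs2 Hs3].
exists (fun z => s (p (z `|` b))); split.
- exact: upoly_comp Hs1 (upoly_joinc _ Hp1).
- by [].
- by rewrite joinxx Hb1.
Qed.

Lemma chi (c : L) : exists p, upoly p /\ forall y,
  (c <= y -> p y = \top) /\ (~~ (c <= y) -> p y = \bot).
Proof.
have : forall s : seq L, exists p, [/\ upoly p, p c = \top &
    forall b, b \in s -> ~~ (c <= b) -> p b = \bot].
  elim=> [|b s [p [Hp1 Hp2 Hp3]]].
    by exists (fun _ => \top); split => //; exact: upoly_const.
  case cb: (c <= b).
    exists p; split => // b'; rewrite inE => /orP [/eqP -> | ]; first by rewrite cb.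
    exact: Hp3.
  case: (lemmaB (negbT cb)) => r [Hr1 Hr2 Hr3].
  exists (fun y => p y `&` r y); split.
  - exact: upoly_meet.
  - by rewrite Hp2 Hr2 meetxx.
  - move=> b'; rewrite inE => /orP [/eqP -> _ | /Hp3 H nb]; first by rewrite Hr3 meetC meet0x.
    by rewrite H // meet0x.
move/(_ (enum L)) => [p [Hp1 Hp2 Hp3]]; exists p; split => // y; split.
  move=> cy; apply/le_anti; rewrite lex1 /= -Hp2; exact: upoly_mono.
by apply: Hp3; rewrite mem_enum.
Qed.

Lemma chi_n n (a : 'I_n -> L) : exists g, is_polynomial g /\ forall x,
  ((forall i, a i <= x i) -> g x = \top) /\
  ((exists i, ~~ (a i <= x i)) -> g x = \bot).
Proof.
have : forall s : seq 'I_n, exists g, is_polynomial g /\ forall x,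
  ((forall i, a i <= x i) -> g x = \top) /\
  ((exists2 i, i \in s & ~~ (a i <= x i)) -> g x = \bot).
  elim=> [|i s [g [Hg1 Hg2]]].
    exists (fun _ => \top); split; first exact: poly_const.
    by move=> x; split => // [[]].
  case: (chi (a i)) => p [Hp1 Hp2].
  exists (fun x => p (x i) `&` g x); split.
    by apply: poly_meet => //; apply: poly_comp Hp1 (poly_var i).
  move=> x; split.
    move=> H; rewrite (proj1 (Hp2 _)) // (proj1 (Hg2 x)) // meetxx //.
  case=> j; rewrite inE => /orP [/eqP -> | js] nj.
    by rewrite (proj2 (Hp2 _)) // meet0x.
  by rewrite (proj2 (Hg2 x)); [rewrite meetC meet0x | exists j].
move/(_ (enum 'I_n)) => [g [Hg1 Hg2]]; exists g; split => // x; split.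
  exact: (proj1 (Hg2 x)).
by case=> i ni; apply: (proj2 (Hg2 x)); exists i; rewrite ?mem_enum.
Qed.

Lemma agg_poly n (f : ('I_n -> L) -> L) :
  (forall x y : 'I_n -> L, (forall i, x i <= y i) -> f x <= f y) ->
  is_polynomial f.
Proof.
move=> Hf.
have : forall s : seq {ffun 'I_n -> L}, exists F, is_polynomial F /\ forall x,
   F x <= f x /\ (finfun x \in s -> f x <= F x).
  elim=> [|a s [F [HF1 HF2]]].
    exists (fun _ => \bot); split; first exact: poly_const.
    by move=> x; split; [exact: le0x | rewrite in_nil].
  case: (chi_n (fun i => a i)) => g [Hg1 Hg2].
  exists (fun x => F x `|` (f (fun i => a i) `&` g x)); split.
    by apply: poly_join => //; apply: poly_meet => //; exact: poly_const.
  move=> x; split.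
    rewrite leUx (proj1 (HF2 x)) /=.
    destruct (classic (forall i, a i <= x i)) as [H|H].
      by apply: le_trans (leIl _ _) _; apply: Hf.
    case: (not_all_ex_not _ _ H) => i Hi.
    rewrite (proj2 (Hg2 x)); first by rewrite meetC meet0x le0x.
    by exists i; apply/negP.
  rewrite inE => /orP [/eqP E | xs]; last first.
    by apply: le_trans (leUl _ _); apply: (proj2 (HF2 x)).
  have ax : forall i, a i = x i by move=> i; rewrite -E ffunE.
  apply: le_trans (leUr _ _); rewrite lexI.
  rewrite (proj1 (Hg2 x)) ?lex1 ?andbT; last by move=> i; rewrite ax.
  by apply: Hf => i; rewrite ax.
move/(_ (enum {ffun 'I_n -> L})) => [F [HF1 HF2]].
case: HF1 => t Ht; exists t => x; rewrite -Ht.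
apply/le_anti; rewrite (proj1 (HF2 x)) /=.
by rewrite andbT; apply: (proj2 (HF2 x)); rewrite mem_enum.
Qed.

End Helpers.

Theorem mainTheorem7 (disp : Order.disp_t) (L : finTBLatticeType disp) :
  simple_lattice L -> modular_lattice L -> complemented_lattice L ->
  forall (n : nat), (0 < n)%N ->
  forall f : ('I_n -> L) -> L, aggregation_function f <-> pol01 f.
Proof.
move=> Hs Hm Hc n _ f; split.
  case=> Hmon H0 H1; split => //; exact: (agg_poly Hs Hm Hc Hmon).
case=> Hp H0 H1; split => // x y; exact: poly_mono.
Qed.
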